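(* Let $\theta>0$, $\lambda>0$, $\mu>0$ with $\lambda<\mu+1$. For $\alpha\ge 0$, $d\ge 0$ let $$\pi(\alpha,d)=(\theta+\mu)\alpha-\frac{\alpha^2}{2}-\frac{\alpha}{\alpha+d}\,\lambda\alpha\theta-d ,$$ and for $\alpha>0$ let $\Pi(\alpha;\theta)=\max_{d\ge 0}\pi(\alpha,d)$. Then the optimal deployment $\alpha^*(\theta)$ maximizing $\Pi(\cdot;\theta)$ is $$\alpha^*(\theta)=\begin{cases}\mu+\theta(1-\lambda), & \lambda\theta\le 1,\\ \theta+\mu+1-2\sqrt{\lambda\theta}, & \lambda\theta>1,\end{cases}$$ with $\alpha^*(\theta)>0$ for all $\theta>0$. The two expressions coincide at $\theta=1/\lambda$.
   Context: $\alpha$ is AI deployment, $d$ security investment, $\theta$ AI capability, $\lambda$ conditional breach-loss magnitude, $\mu$ complementary organizational readiness. Breach probability is $p(\alpha,d)=\alpha/(\alpha+d)$ and breach damage is $\lambda\alpha\theta$. *)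

(* Defs.v *)
From Stdlib Require Import Reals Lra.
Open Scope R_scope.

Definition profit (theta lambda mu alpha d : R) : R :=
  (theta + mu) * alpha - alpha ^ 2 / 2
  - alpha / (alpha + d) * (lambda * alpha * theta) - d.

Definition is_max_value (S : R -> Prop) (f : R -> R) (v : R) : Prop :=
  (exists x, S x /\ f x = v) /\ (forall x, S x -> f x <= v).

Definition is_Pi (theta lambda mu alpha v : R) : Prop :=
  is_max_value (fun d => 0 <= d) (profit theta lambda mu alpha) v.

Definition alpha_star (theta lambda mu : R) : R :=
  if Rle_dec (lambda * theta) 1 then mu + theta * (1 - lambda)
  else theta + mu + 1 - 2 * sqrt (lambda * theta).

(* Main.v *)
Require Import Defs.
From Stdlib Require Import Reals Lra Psatz.
Open Scope R_scope.

Definition cc (theta lambda : R) : R :=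
  if Rle_dec (lambda * theta) 1 then - (lambda * theta)
  else 1 - 2 * sqrt (lambda * theta).

Definition Pival (theta lambda mu alpha : R) : R :=
  (theta + mu) * alpha - alpha ^ 2 / 2 + cc theta lambda * alpha.

Lemma pos_div_le (x s : R) : 0 < s -> 0 <= x * s -> 0 <= x.
Proof.
  intros Hs H. destruct (Rle_or_lt 0 x) as [h|h]; auto.
  exfalso. assert (x * s < 0) by nra. lra.
Qed.

Lemma Pi_ok theta lambda mu alpha :
  0 < theta -> 0 < lambda -> 0 < alpha ->
  is_Pi theta lambda mu alpha (Pival theta lambda mu alpha).
Proof.
  intros Ht Hl Ha. unfold is_Pi, is_max_value, Pival, profit, cc.
  destruct (Rle_dec (lambda * theta) 1) as [h|h].
  - split.
    + exists 0. split; [lra|]. replace (alpha + 0) with alpha by ring.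
      field. lra.
    + intros d Hd.
      set (t := alpha / (alpha + d) * (lambda * alpha * theta)).
      assert (Et : t * (alpha + d) = lambda * theta * alpha ^ 2)
        by (unfold t; field; lra).
      assert (0 <= (t + d - lambda * theta * alpha) * (alpha + d)).
      { replace ((t + d - lambda * theta * alpha) * (alpha + d)) with
          (d * (d + alpha * (1 - lambda * theta))) by nra.
        apply Rmult_le_pos; nra. }
      apply pos_div_le in H; lra.
  - assert (Hk : 0 <= sqrt (lambda * theta)) by apply sqrt_pos.
    assert (Hk2 : sqrt (lambda * theta) * sqrt (lambda * theta) = lambda * theta)
      by (apply sqrt_sqrt; nra).
    set (k := sqrt (lambda * theta)) in *.
    assert (Hk1 : 1 < k) by nra.
    split.
    + exists (alpha * (k - 1)). split; [nra|].
      replace (alpha + alpha * (k - 1)) with (alpha * k) by ring.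
      replace (lambda * alpha * theta) with (alpha * (k * k)) by nra. field. lra.
    + intros d Hd.
      set (t := alpha / (alpha + d) * (lambda * alpha * theta)).
      assert (Et : t * (alpha + d) = lambda * theta * alpha ^ 2)
        by (unfold t; field; lra).
      assert (0 <= (t + (alpha + d) - 2 * k * alpha) * (alpha + d)).
      { replace ((t + (alpha + d) - 2 * k * alpha) * (alpha + d)) with
          ((alpha + d - k * alpha) ^ 2) by nra.
        apply pow2_ge_0. }
      apply pos_div_le in H; lra.
Qed.

Lemma max_unique S f v w : is_max_value S f v -> is_max_value S f w -> v = w.
Proof.
  intros [[x [Sx Fx]] Hv] [[y [Sy Fy]] Hw].
  specialize (Hv y Sy). specialize (Hw x Sx). lra.
Qed.

Lemma astar_eq theta lambda mu : alpha_star theta lambda mu = theta + mu + cc theta lambda.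
Proof. unfold alpha_star, cc. destruct (Rle_dec (lambda * theta) 1); ring. Qed.

Theorem proposition1 (lambda mu : R) :
  0 < lambda -> 0 < mu -> lambda < mu + 1 ->
  (forall theta : R, 0 < theta ->
     (* alpha* is positive *)
     0 < alpha_star theta lambda mu /\
     (* Pi(alpha; theta) = max_{d>=0} pi(alpha,d) exists for every alpha > 0 *)
     (forall alpha, 0 < alpha -> exists v, is_Pi theta lambda mu alpha v) /\
     (* alpha* is the (unique) maximizer of Pi(.; theta) over alpha > 0 *)
     (forall alpha v vstar, 0 < alpha -> alpha <> alpha_star theta lambda mu ->
        is_Pi theta lambda mu alpha v ->
        is_Pi theta lambda mu (alpha_star theta lambda mu) vstar ->
        v < vstar)) /\
  (* the two branches coincide at theta = 1/lambda *)
  mu + (/ lambda) * (1 - lambda) = / lambda + mu + 1 - 2 * sqrt (lambda * / lambda).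
Proof.
  intros Hl Hm Hlm. split.
  - intros theta Ht.
    assert (Hpos : 0 < alpha_star theta lambda mu).
    { unfold alpha_star. destruct (Rle_dec (lambda * theta) 1) as [h|h].
      + destruct (Rle_or_lt lambda 1); [nra|].
        assert (theta * (lambda - 1) * lambda <= lambda - 1) by nra.
        assert (theta * (lambda - 1) <= 1 - / lambda).
        { apply Rmult_le_reg_r with lambda; auto.
          replace ((1 - / lambda) * lambda) with (lambda - 1) by (field; lra). lra. }
        assert (0 < / lambda) by (apply Rinv_0_lt_compat; lra). nra.
      + rewrite sqrt_mult by lra.
        assert (Ha := sqrt_sqrt lambda ltac:(lra)).
        assert (Hb := sqrt_sqrt theta ltac:(lra)).
        assert (0 <= (sqrt theta - sqrt lambda) ^ 2) by apply pow2_ge_0.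
        nra. }
    split; [exact Hpos|]. split.
    + intros alpha Ha. exists (Pival theta lambda mu alpha). apply Pi_ok; lra.
    + intros alpha v vstar Ha Hne Hv Hvs.
      rewrite (max_unique _ _ _ _ Hv (Pi_ok theta lambda mu alpha Ht Hl Ha)).
      rewrite (max_unique _ _ _ _ Hvs (Pi_ok theta lambda mu _ Ht Hl Hpos)).
      rewrite astar_eq in *. unfold Pival.
      assert (Hnz : alpha - (theta + mu + cc theta lambda) <> 0) by lra.
      assert (0 < (alpha - (theta + mu + cc theta lambda)) ^ 2).
      { pose proof (Rsqr_pos_lt _ Hnz) as Hs; unfold Rsqr in Hs; simpl; lra. } 
      nra.
  - rewrite Rinv_r by lra. rewrite sqrt_1. field. lra.
Qed.
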